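(* For every $b,a\in\mathbb R$, each of the following systems has an isochronous center at the origin $O$ with zero Urabe function: (i) $\dot x=-y+bxy+x^2-bx^3$, $\dot y=x+by^2-2xy+2x^3-bx^4$; (ii) $\dot x=-y+xy-ax^2+ax^3$, $\dot y=x+y^2+2axy+2a^2x^3-a^2x^4$; (iii) $\dot x=-y+xy-ax^2+ax^3$, $\dot y=x+3y^2+2axy-x^2+4ax^2y+\left(\frac13+2a^2\right)x^3+a^2x^4$; (iv) $\dot x=-y+xy-ax^2+ax^3$, $\dot y=x+4y^2+2axy-\frac32x^2+6ax^2y+(1+2a^2)x^3+\left(-\frac14+2a^2\right)x^4$.
   Context: For a real planar polynomial system $\dot x=-y+A(x,y)$, $\dot y=x+B(x,y)$, with $A,B$ polynomials having no terms of degree $<2$, the origin $O$ is an isochronous center if there is a punctured neighborhood of $O$ in which every orbit is a closed orbit surrounding $O$ and all these orbits have the same period. Zero Urabe function: write the system as $\dot x=p_0(x)+p_1(x)y$, $\dot y=q_0(x)+q_1(x)y+q_2(x)y^2$ ($p_0(0)=q_0(0)=0$, $p_1(0)\ne0$), where it holds that $-\frac{p_1'p_0}{p_1}+q_1+p_0'-\frac{2q_2p_0}{p_1}\equiv0$. Put $f=-\frac{q_2+p_1'}{p_1}$, $g=-\frac{q_2p_0^2}{p_1}+q_1p_0-p_1q_0$ (the change $z=p_0+p_1y$ gives $\dot x=z$, $\dot z=-g(x)-f(x)z^2$), $F(x)=\int_0^xf$, and $\xi$ near $0$ by $\frac12\xi(x)^2=\int_0^xg(s)e^{2F(s)}ds$,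 $x\xi(x)>0$ for $x\ne0$. The Urabe function of an isochronous center is the odd analytic $h$ with $\frac{\xi(x)}{1+h(\xi(x))}=g(x)e^{F(x)}$; ''zero Urabe function'' means $h\equiv0$, i.e. $\xi(x)=g(x)e^{F(x)}$ near $0$. *)

(* Defs.v *)
From Stdlib Require Import Reals.
Open Scope R_scope.

Definition is_solution (P Q : R -> R -> R) (x y : R -> R) : Prop :=
  forall t, derivable_pt_lim x t (P (x t) (y t)) /\
            derivable_pt_lim y t (Q (x t) (y t)).

(* The orbit through (x0,y0) is a closed orbit of (minimal) period T
   surrounding the origin O: it avoids O and its polar angle (a continuous
   lift theta) changes over one period, i.e. its winding number about O
   is non-zero. *)
Definition closed_orbit_surrounding_O (P Q : R -> R -> R) (x0 y0 T : R) : Prop :=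
  exists x y : R -> R,
    is_solution P Q x y /\ x 0 = x0 /\ y 0 = y0 /\
    (forall t, x (t + T) = x t /\ y (t + T) = y t) /\
    (forall s, 0 < s < T -> ~ (x s = x0 /\ y s = y0)) /\
    (forall t, 0 < x t ^ 2 + y t ^ 2) /\
    exists theta : R -> R,
      (forall t, continuity_pt theta t) /\
      (forall t, x t = sqrt (x t ^ 2 + y t ^ 2) * cos (theta t) /\
                 y t = sqrt (x t ^ 2 + y t ^ 2) * sin (theta t)) /\
      theta T <> theta 0.

Definition isochronous_center (P Q : R -> R -> R) : Prop :=
  exists delta T : R, 0 < delta /\ 0 < T /\
    forall x0 y0, 0 < x0 ^ 2 + y0 ^ 2 < delta ^ 2 ->
      closed_orbit_surrounding_O P Q x0 y0 T.

Definition is_integral (h : R -> R) (a b v : R) : Prop :=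
  exists pr : Riemann_integrable h a b, RiemannInt pr = v.

(* The system is written as
     x' = p0(x) + p1(x) y,  y' = q0(x) + q1(x) y + q2(x) y^2,
   p0(0)=q0(0)=0, p1(0)<>0, with
     -p1' p0/p1 + q1 + p0' - 2 q2 p0/p1 = 0  (wherever p1 <> 0);
   f = -(q2 + p1')/p1, g = -q2 p0^2/p1 + q1 p0 - p1 q0, F(x) = \int_0^x f,
   and xi is defined near 0 by  xi(x)^2/2 = \int_0^x g e^{2F},  x xi(x) > 0
   for x <> 0.  Zero Urabe function means xi(x) = g(x) e^{F(x)} near 0, i.e.
   the function g e^F satisfies the defining conditions of xi near 0
   (xi being uniquely determined by them). *)
Definition zero_urabe (P Q : R -> R -> R) : Prop :=
  exists p0 p1 q0 q1 q2 dp0 dp1 : R -> R,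
    (forall x y, P x y = p0 x + p1 x * y) /\
    (forall x y, Q x y = q0 x + q1 x * y + q2 x * y ^ 2) /\
    p0 0 = 0 /\ q0 0 = 0 /\ p1 0 <> 0 /\
    (forall x, derivable_pt_lim p0 x (dp0 x)) /\
    (forall x, derivable_pt_lim p1 x (dp1 x)) /\
    (forall x, p1 x <> 0 ->
       - dp1 x * p0 x / p1 x + q1 x + dp0 x - 2 * q2 x * p0 x / p1 x = 0) /\
    let f := fun x => - (q2 x + dp1 x) / p1 x in
    let g := fun x => - q2 x * p0 x ^ 2 / p1 x + q1 x * p0 x - p1 x * q0 x in
    exists (delta : R) (F : R -> R), 0 < delta /\
      (forall x, - delta < x < delta -> is_integral f 0 x (F x)) /\
      (forall x, - delta < x < delta ->
         is_integral (fun s => g s * exp (2 * F s)) 0 x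
                     (/ 2 * (g x * exp (F x)) ^ 2)) /\
      (forall x, - delta < x < delta -> x <> 0 -> 0 < x * (g x * exp (F x))).

Definition isochronous_center_zero_urabe (P Q : R -> R -> R) : Prop :=
  isochronous_center P Q /\ zero_urabe P Q.

(* Main.v *)
Require Import Defs.
From Stdlib Require Import Reals Lra Lia Psatz Ranalysis3 Ratan.
Open Scope R_scope.

Lemma D_eq f x l1 l2 : derivable_pt_lim f x l1 -> l1 = l2 -> derivable_pt_lim f x l2.
Proof. intros H ->; exact H. Qed.
Lemma D_const c x : derivable_pt_lim (fun _ => c) x 0.
Proof. apply (derivable_pt_lim_const c x). Qed.
Lemma D_id x : derivable_pt_lim (fun t => t) x 1.
Proof. apply (derivable_pt_lim_id x). Qed.
Lemma D_plus f g x a b : derivable_pt_lim f x a -> derivable_pt_lim g x b ->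
  derivable_pt_lim (fun t => f t + g t) x (a + b).
Proof. intros; apply (derivable_pt_lim_plus f g); auto. Qed.
Lemma D_minus f g x a b : derivable_pt_lim f x a -> derivable_pt_lim g x b ->
  derivable_pt_lim (fun t => f t - g t) x (a - b).
Proof. intros; apply (derivable_pt_lim_minus f g); auto. Qed.
Lemma D_mult f g x a b : derivable_pt_lim f x a -> derivable_pt_lim g x b ->
  derivable_pt_lim (fun t => f t * g t) x (a * g x + f x * b).
Proof. intros; apply (derivable_pt_lim_mult f g); auto. Qed.
Lemma D_opp f x a : derivable_pt_lim f x a -> derivable_pt_lim (fun t => - f t) x (- a).
Proof. intros; apply (derivable_pt_lim_opp f); auto. Qed.
Lemma D_comp f h x a b : derivable_pt_lim f x a -> derivable_pt_lim h (f x) b ->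
  derivable_pt_lim (fun t => h (f t)) x (b * a).
Proof. intros; apply (derivable_pt_lim_comp f h); auto. Qed.
Lemma D_inv f x a : derivable_pt_lim f x a -> f x <> 0 ->
  derivable_pt_lim (fun t => / f t) x (- a / (f x)^2).
Proof. intros H Hn.
  assert (H2 := derivable_pt_lim_div (fun _ => 1) f x 0 a (D_const 1 x) H Hn).
  eapply derivable_pt_lim_ext. 2: eapply D_eq; [exact H2|].
  - intro z; unfold div_fct; simpl; unfold Rdiv; ring.
  - unfold Rsqr; simpl; field; auto.
Qed.
Lemma D_pow f x a n : derivable_pt_lim f x a ->
  derivable_pt_lim (fun t => (f t) ^ n) x (INR n * (f x) ^ pred n * a).
Proof. intros; apply (D_comp f (fun y => y ^ n)); auto; apply derivable_pt_lim_pow. Qed.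
Lemma D_exp f x a : derivable_pt_lim f x a ->
  derivable_pt_lim (fun t => exp (f t)) x (exp (f x) * a).
Proof. intros; apply (D_comp f exp); auto; apply derivable_pt_lim_exp. Qed.
Lemma D_ln f x a : derivable_pt_lim f x a -> 0 < f x ->
  derivable_pt_lim (fun t => ln (f t)) x (/ f x * a).
Proof. intros; apply (D_comp f ln); auto; apply derivable_pt_lim_ln; auto. Qed.
Lemma D_cos x : derivable_pt_lim cos x (- sin x).
Proof. apply derivable_pt_lim_cos. Qed.
Lemma D_sin x : derivable_pt_lim sin x (cos x).
Proof. apply derivable_pt_lim_sin. Qed.

Lemma ftc_le h H a b : a <= b -> (forall s, a <= s <= b -> continuity_pt h s) ->
  (forall s, a <= s <= b -> derivable_pt_lim H s (h s)) ->
  forall pr : Riemann_integrable h a b, RiemannInt pr = H b - H a.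
Proof.
  intros Hab Hc HD pr.
  rewrite (RiemannInt_P20 Hab (FTC_P1 Hab Hc) pr).
  assert (A1 := RiemannInt_P29 Hab Hc).
  assert (A2 : antiderivative h H a b).
  { split; [|exact Hab]. intros x Hx.
    exists (exist _ (h x) (HD x Hx)). reflexivity. }
  destruct (antiderivative_Ucte _ _ _ _ _ A1 A2) as [C HC].
  rewrite !HC; [ring| split; lra | split; lra].
Qed.

Lemma ftc h H a b :
  (forall s, Rmin a b <= s <= Rmax a b -> continuity_pt h s /\ derivable_pt_lim H s (h s)) ->
  is_integral h a b (H b - H a).
Proof.
  intros Hs. destruct (Rle_dec a b) as [Hab|Hab].
  - rewrite Rmin_left, Rmax_right in Hs by lra.
    assert (pr : Riemann_integrable h a b).
    { apply continuity_implies_RiemannInt; auto. intros; apply Hs; auto. }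
    exists pr. apply ftc_le; auto; intros; apply Hs; auto.
  - rewrite Rmin_right, Rmax_left in Hs by lra.
    assert (pr : Riemann_integrable h b a).
    { apply continuity_implies_RiemannInt; [lra|]. intros; apply Hs; auto. }
    exists (RiemannInt_P1 pr). rewrite (RiemannInt_P8 _ pr).
    rewrite (ftc_le h H b a); [ring|lra| |]; intros; apply Hs; auto.
Qed.

Lemma interval_sub d x s : -d < x < d -> Rmin 0 x <= s <= Rmax 0 x -> -d < s < d.
Proof. intros Hx Hs. unfold Rmin, Rmax in Hs. destruct (Rle_dec 0 x); lra. Qed.

Lemma zu_gen P Q p0 p1 q0 q1 q2 dp0 dp1 (d : R) (F G dG : R -> R) :
  (forall x y, P x y = p0 x + p1 x * y) ->
  (forall x y, Q x y = q0 x + q1 x * y + q2 x * y ^ 2) ->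
  p0 0 = 0 -> q0 0 = 0 -> p1 0 <> 0 ->
  (forall x, derivable_pt_lim p0 x (dp0 x)) ->
  (forall x, derivable_pt_lim p1 x (dp1 x)) ->
  (forall x, p1 x <> 0 -> - dp1 x * p0 x / p1 x + q1 x + dp0 x - 2 * q2 x * p0 x / p1 x = 0) ->
  0 < d ->
  F 0 = 0 ->
  (forall x, -d < x < d -> derivable_pt_lim F x (- (q2 x + dp1 x) / p1 x) /\
      continuity_pt (fun x => - (q2 x + dp1 x) / p1 x) x) ->
  (forall x, -d < x < d -> G x = - q2 x * p0 x ^ 2 / p1 x + q1 x * p0 x - p1 x * q0 x) ->
  (forall x, -d < x < d -> derivable_pt_lim G x (dG x) /\
      dG x + G x * (- (q2 x + dp1 x) / p1 x) = 1) ->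
  (forall x, -d < x < d -> x <> 0 -> 0 < x * G x) ->
  zero_urabe P Q.
Proof.
  intros HP HQ H00 Hq00 Hp10 Hdp0 Hdp1 Hcond Hd HF0 HF HG HdG Hpos.
  exists p0, p1, q0, q1, q2, dp0, dp1.
  do 8 (split; [assumption|]).
  cbv zeta.
  exists d, F. split; [exact Hd|]. split; [|split].
  - intros x Hx. replace (F x) with (F x - F 0) by (rewrite HF0; ring).
    apply ftc. intros s Hs. assert (Hs' := interval_sub d x s Hx Hs).
    destruct (HF s Hs') as [A B]. split; assumption.
  - intros x Hx.
    assert (HG0 : G 0 = 0).
    { rewrite HG by lra. rewrite H00, Hq00. unfold Rdiv. ring. }
    replace (/ 2 * ((- q2 x * p0 x ^ 2 / p1 x + q1 x * p0 x - p1 x * q0 x) * exp (F x)) ^ 2)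
      with ((fun s => / 2 * (G s * exp (F s)) ^ 2) x - (fun s => / 2 * (G s * exp (F s)) ^ 2) 0).
    2:{ cbv beta. rewrite HG0, (HG x Hx). ring. }
    apply (ftc _ (fun s => / 2 * (G s * exp (F s)) ^ 2)). intros s Hs. assert (Hs' := interval_sub d x s Hx Hs).
    destruct (HF s Hs') as [HFd _]. destruct (HdG s Hs') as [HGd HGe].
    split.
    + apply continuity_pt_locally_ext with (a := Rmin (s + d) (d - s))
        (f := fun s => G s * exp (2 * F s)).
      * apply Rmin_pos; lra.
      * intros y Hy. unfold Rdist in Hy. rewrite HG; [reflexivity|].
        assert (Rabs (y - s) < s + d /\ Rabs (y - s) < d - s).
        { split; eapply Rlt_le_trans; try exact Hy; [apply Rmin_l | apply Rmin_r]. }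
        destruct H as [H1 H2]. apply Rabs_def2 in H1. apply Rabs_def2 in H2. lra.
      * apply derivable_continuous_pt.
        eexists. apply D_mult; [exact HGd|]. apply (D_exp (fun t => 2 * F t)).
        apply (D_mult (fun _ => 2) F). apply D_const. exact HFd.
    + rewrite <- HG by exact Hs'.
      eapply D_eq.
      * apply D_mult. apply D_const. apply D_pow. apply D_mult. exact HGd. apply D_exp. exact HFd.
      * set (fs := - (q2 s + dp1 s) / p1 s) in *. change (pred 2) with 1%nat. change (INR 2) with 2. replace (2 * F s) with (F s + F s) by ring. rewrite exp_plus.
        transitivity (G s * exp (F s) * exp (F s) * (dG s + G s * fs)).
        -- field.
        -- rewrite HGe. ring.
  - intros x Hx Hx0. rewrite <- HG by exact Hx. rewrite <- Rmult_assoc.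
    apply Rmult_lt_0_compat; [apply Hpos; auto | apply exp_pos].
Qed.

Lemma sqrt_sq_eq a b : 0 <= b -> a = b^2 -> sqrt a = b.
Proof. intros Hb ->. apply sqrt_pow2; auto. Qed.

Lemma Rdiv_le_0_compat a b : 0 <= a -> 0 < b -> 0 <= a / b.
Proof. intros; unfold Rdiv; apply Rmult_le_pos; [lra|left; apply Rinv_0_lt_compat; lra]. Qed.

Lemma polar_angle u0 v0 : 0 < u0^2 + v0^2 ->
  exists al, cos al = u0 / sqrt (u0^2+v0^2) /\ sin al = v0 / sqrt (u0^2+v0^2).
Proof.
  intros H. set (r := sqrt (u0^2+v0^2)).
  assert (Hr : 0 < r) by (apply sqrt_lt_R0; lra).
  assert (Hr2 : r^2 = u0^2+v0^2) by (unfold r; rewrite <- Rsqr_pow2; apply Rsqr_sqrt; lra).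
  assert (Hc : -1 <= u0 / r <= 1).
  { assert ((u0/r)^2 <= 1).
    { replace ((u0/r)^2) with (u0^2/r^2) by (field; lra). rewrite Hr2.
      apply Rmult_le_reg_r with (u0^2+v0^2); [lra|]. unfold Rdiv. rewrite Rmult_assoc, Rinv_l by lra. nra. }
    nra. }
  assert (Hs : 1 - (u0/r)² = (v0/r)^2).
  { unfold Rsqr. replace 1 with (r^2/r^2) at 1 by (field; lra). rewrite Hr2 at 1. field. lra. }
  destruct (Rle_dec 0 v0) as [Hv|Hv].
  - exists (acos (u0/r)). split. apply cos_acos; auto.
    rewrite sin_acos by auto. rewrite Hs. apply sqrt_sq_eq; [|reflexivity].
    apply Rdiv_le_0_compat; lra.
  - exists (- acos (u0/r)). split. rewrite cos_neg; apply cos_acos; auto.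
    rewrite sin_neg, sin_acos by auto. rewrite Hs.
    replace ((v0/r)^2) with ((-(v0/r))^2) by ring.
    rewrite (sqrt_sq_eq _ (-(v0/r))); [ring| |reflexivity].
    replace (- (v0/r)) with ((-v0)/r) by (field; lra). apply Rdiv_le_0_compat; lra.
Qed.

Lemma polar_alg x y U V rho cb sb :
  0 < x*U - y*V -> 0 < rho -> U^2+V^2 = rho^2 -> cb = U/rho -> sb = -V/rho ->
  let q := (y*U+x*V)/(x*U-y*V) in
  sqrt (x^2+y^2) * (cb * (1/sqrt(1+q²)) - sb * (q/sqrt(1+q²))) = x /\
  sqrt (x^2+y^2) * (sb * (1/sqrt(1+q²)) + cb * (q/sqrt(1+q²))) = y.
Proof.
  intros HD Hrho HUV -> -> q.
  set (D := x*U - y*V) in *. set (C := y*U+x*V).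
  assert (Hxy : 0 < x^2+y^2).
  { destruct (Req_dec x 0); destruct (Req_dec y 0); subst; try nra.
    unfold D in HD. lra. }
  set (r := sqrt (x^2+y^2)).
  assert (Hr : 0 < r) by (apply sqrt_lt_R0; lra).
  assert (Hr2 : r^2 = x^2+y^2) by (unfold r; rewrite <- Rsqr_pow2; apply Rsqr_sqrt; lra).
  assert (Hsq : sqrt (1 + q²) = r * rho / D).
  { apply sqrt_sq_eq. apply Rlt_le, Rdiv_lt_0_compat; [apply Rmult_lt_0_compat|]; lra.
    unfold q, Rsqr. fold C. field_simplify; [|lra..].
    assert (E : D^2 + C^2 = (x^2+y^2)*(U^2+V^2)) by (unfold D, C; ring).
    rewrite <- Hr2, HUV in E. rewrite <- E. field. lra. }
  rewrite Hsq. unfold q. fold C.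
  assert (K1 : U*D + V*C = x*rho^2) by (rewrite <- HUV; unfold D, C; ring).
  assert (K2 : -V*D + U*C = y*rho^2) by (rewrite <- HUV; unfold D, C; ring).
  split.
  - transitivity ((U*D + V*C)/rho^2). field. lra. rewrite K1. field. lra.
  - transitivity ((-V*D + U*C)/rho^2). field. lra. rewrite K2. field. lra.
Qed.
Lemma D_div f g x a b : derivable_pt_lim f x a -> derivable_pt_lim g x b -> g x <> 0 ->
  derivable_pt_lim (fun t => f t / g t) x ((a * g x - b * f x) / (g x)^2).
Proof. intros Ha Hb Hg. assert (H := derivable_pt_lim_div f g x a b Ha Hb Hg).
  eapply derivable_pt_lim_ext; [|eapply D_eq; [exact H|]].
  - intro z; reflexivity.
  - unfold Rsqr; field; auto. Qed.

Definition Uf u0 v0 t := u0 * cos t + v0 * sin t.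
Definition Vf u0 v0 t := v0 * cos t - u0 * sin t.

Lemma Uf_0 u0 v0 : Uf u0 v0 0 = u0.
Proof. unfold Uf; rewrite cos_0, sin_0; ring. Qed.
Lemma Vf_0 u0 v0 : Vf u0 v0 0 = v0.
Proof. unfold Vf; rewrite cos_0, sin_0; ring. Qed.
Lemma Uf_per u0 v0 t : Uf u0 v0 (t + 2*PI) = Uf u0 v0 t.
Proof. unfold Uf; rewrite cos_plus, sin_plus, cos_2PI, sin_2PI; ring. Qed.
Lemma Vf_per u0 v0 t : Vf u0 v0 (t + 2*PI) = Vf u0 v0 t.
Proof. unfold Vf; rewrite cos_plus, sin_plus, cos_2PI, sin_2PI; ring. Qed.
Lemma UV_sq u0 v0 t : (Uf u0 v0 t)^2 + (Vf u0 v0 t)^2 = u0^2 + v0^2.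
Proof. unfold Uf, Vf. assert (H := sin2_cos2 t). unfold Rsqr in H.
  transitivity ((u0^2+v0^2) * (sin t * sin t + cos t * cos t)); [ring|]. rewrite H; ring. Qed.
Lemma D_Uf u0 v0 t : derivable_pt_lim (Uf u0 v0) t (Vf u0 v0 t).
Proof. unfold Uf, Vf. eapply D_eq. apply D_plus; apply D_mult; try apply D_const.
  apply D_cos. apply D_sin. cbv beta; ring. Qed.
Lemma D_Vf u0 v0 t : derivable_pt_lim (Vf u0 v0) t (- Uf u0 v0 t).
Proof. unfold Uf, Vf. eapply D_eq. apply D_minus; apply D_mult; try apply D_const.
  apply D_cos. apply D_sin. cbv beta; ring. Qed.

Lemma no_return s : 0 < s < 2*PI -> cos s = 1 -> sin s = 0 -> False.
Proof.
  intros Hs Hc Hsn.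
  destruct (Rtotal_order s PI) as [H|[H|H]].
  - assert (0 < sin s) by (apply sin_gt_0; lra). lra.
  - subst. rewrite cos_PI in Hc. lra.
  - assert (sin s < 0) by (apply sin_lt_0; lra). lra.
Qed.

Lemma orbit_gen (P Q X Y F1 F2 : R -> R -> R) (u0 v0 : R) :
  0 < u0^2 + v0^2 ->
  is_solution P Q (fun t => X (Uf u0 v0 t) (Vf u0 v0 t)) (fun t => Y (Uf u0 v0 t) (Vf u0 v0 t)) ->
  (forall t, F1 (X (Uf u0 v0 t) (Vf u0 v0 t)) (Y (Uf u0 v0 t) (Vf u0 v0 t)) = Uf u0 v0 t /\
             F2 (X (Uf u0 v0 t) (Vf u0 v0 t)) (Y (Uf u0 v0 t) (Vf u0 v0 t)) = Vf u0 v0 t) ->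
  (forall t, 0 < X (Uf u0 v0 t) (Vf u0 v0 t) * Uf u0 v0 t - Y (Uf u0 v0 t) (Vf u0 v0 t) * Vf u0 v0 t) ->
  closed_orbit_surrounding_O P Q (X u0 v0) (Y u0 v0) (2*PI).
Proof.
  intros Hpos Hsol Hinv Hdot.
  set (U := Uf u0 v0) in *. set (V := Vf u0 v0) in *.
  set (x := fun t => X (U t) (V t)) in *. set (y := fun t => Y (U t) (V t)) in *.
  assert (HU0 : U 0 = u0) by apply Uf_0. assert (HV0 : V 0 = v0) by apply Vf_0.
  assert (Hper : forall t, x (t + 2*PI) = x t /\ y (t + 2*PI) = y t).
  { intro t; unfold x, y, U, V; rewrite Uf_per, Vf_per; auto. }
  exists x, y. split; [exact Hsol|].
  split; [unfold x; rewrite HU0, HV0; reflexivity|].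
  split; [unfold y; rewrite HU0, HV0; reflexivity|].
  split; [exact Hper|].
  split.
  { intros s Hs [E1 E2].
    destruct (Hinv s) as [A1 A2]. destruct (Hinv 0) as [B1 B2].
    fold (x s) (y s) (x 0) (y 0) in A1, A2, B1, B2.
    assert (Ex : x 0 = X u0 v0) by (unfold x; rewrite HU0, HV0; reflexivity).
    assert (Ey : y 0 = Y u0 v0) by (unfold y; rewrite HU0, HV0; reflexivity).
    rewrite E1, E2, <- Ex, <- Ey, B1 in A1. rewrite E1, E2, <- Ex, <- Ey, B2 in A2.
    rewrite HU0 in A1. rewrite HV0 in A2. unfold U, V, Uf, Vf in A1, A2.
    assert (E3 : (u0^2+v0^2)*(cos s - 1) = 0).
    { transitivity (u0*(u0 * cos s + v0 * sin s - u0) + v0*(v0*cos s - u0*sin s - v0)); [ring|].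
      rewrite <- A1, <- A2; ring. }
    assert (E4 : (u0^2+v0^2)*(sin s) = 0).
    { transitivity (v0*(u0 * cos s + v0 * sin s - u0) - u0*(v0*cos s - u0*sin s - v0)); [ring|].
      rewrite <- A1, <- A2; ring. }
    apply (no_return s Hs).
    - apply Rmult_integral in E3. destruct E3; [lra|]. lra.
    - apply Rmult_integral in E4. destruct E4; lra. }
  split.
  { intro t. assert (H := Hdot t). fold (x t) (y t) in H.
    destruct (Req_dec (x t) 0) as [Hx|Hx]; [destruct (Req_dec (y t) 0) as [Hy|Hy]|].
    - rewrite Hx, Hy in H. lra.
    - assert (0 < Rsqr (y t)) by (apply Rsqr_pos_lt; auto). unfold Rsqr in *. nra.
    - assert (0 < Rsqr (x t)) by (apply Rsqr_pos_lt; auto). unfold Rsqr in *. nra. }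
  destruct (polar_angle u0 v0 Hpos) as [al [Hca Hsa]].
  set (rho := sqrt (u0^2+v0^2)) in *.
  assert (Hrho : 0 < rho) by (apply sqrt_lt_R0; lra).
  assert (Hrho2 : rho^2 = u0^2+v0^2) by (unfold rho; rewrite <- Rsqr_pow2; apply Rsqr_sqrt; lra).
  set (q := fun t => (y t * U t + x t * V t) / (x t * U t - y t * V t)).
  exists (fun t => t - al + atan (q t)).
  split; [|split].
  - intro t. apply derivable_continuous_pt.
    destruct (Hsol t) as [Dx Dy].
    assert (DU := D_Uf u0 v0 t). assert (DV := D_Vf u0 v0 t). fold U V in DU, DV.
    eexists. apply D_plus. apply D_minus. apply D_id. apply D_const.
    apply (D_comp q atan); [|apply derivable_pt_lim_atan].
    unfold q. apply D_div.
    + apply D_plus; apply D_mult; eauto.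
    + apply D_minus; apply D_mult; eauto.
    + assert (H := Hdot t). fold (x t) (y t) in H. lra.
  - intro t.
    assert (HD := Hdot t). fold (x t) (y t) in HD.
    assert (HUV : U t ^2 + V t ^2 = rho^2) by (rewrite Hrho2; apply UV_sq).
    assert (Hcb : cos (t - al) = U t / rho).
    { rewrite cos_minus, Hca, Hsa. unfold U, Uf. field. lra. }
    assert (Hsb : sin (t - al) = - V t / rho).
    { rewrite sin_minus, Hca, Hsa. unfold V, Vf. field. lra. }
    destruct (polar_alg (x t) (y t) (U t) (V t) rho _ _ HD Hrho HUV Hcb Hsb) as [A B].
    rewrite cos_plus, sin_plus, cos_atan, sin_atan. split; symmetry; [exact A| exact B].
  - destruct (Hper 0) as [P1 P2]. rewrite Rplus_0_l in P1, P2.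
    assert (Hq : q (2*PI) = q 0).
    { unfold q. rewrite P1, P2. unfold U, V. replace (2*PI) with (0 + 2*PI) by ring.
      rewrite Uf_per, Vf_per. reflexivity. }
    rewrite Hq. assert (PI_RGT_0 := PI_RGT_0). lra.
Qed.
Lemma exp_pow z n : exp z ^ n = exp (INR n * z).
Proof. induction n; simpl pow. rewrite Rmult_0_l, exp_0; reflexivity.
  rewrite IHn, S_INR, <- exp_plus. f_equal; ring. Qed.

Definition Wk (k : nat) u := exp (- ln (1 + INR k * u) / INR k).

Lemma INR_pos k : (1 <= k)%nat -> 0 < INR k.
Proof. intro; apply lt_0_INR; lia. Qed.

Lemma W_pow k u : (1 <= k)%nat -> 0 < 1 + INR k * u -> (Wk k u)^k = / (1 + INR k * u).
Proof. intros Hk Hu. unfold Wk. rewrite exp_pow.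
  replace (INR k * (- ln (1 + INR k * u) / INR k)) with (ln (/ (1 + INR k * u))).
  apply exp_ln. apply Rinv_0_lt_compat; auto.
  rewrite ln_Rinv by auto. field. apply Rgt_not_eq, INR_pos; auto. Qed.

Lemma W_pos k u : 0 < Wk k u.
Proof. apply exp_pos. Qed.

Lemma geo_fact w k : 0 < w -> (1 <= k)%nat -> exists S, 1 <= S /\ 1 - w^k = (1 - w) * S.
Proof. intros Hw Hk. induction k as [|k IH]; [lia|].
  destruct (Nat.eq_dec k 0) as [->|Hk0].
  - exists 1. split; [lra|]. simpl; ring.
  - destruct IH as [S [HS E]]; [lia|]. exists (1 + w * S). split.
    + assert (0 < w * S) by (apply Rmult_lt_0_compat; lra). lra.
    + simpl pow. transitivity ((1 - w) + w * (1 - w^k)); [ring|]. rewrite E; ring.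
Qed.

Definition Xk (k : nat) (u v : R) := 1 - Wk k u.
Definition Yk (a : R) (k : nat) (u v : R) := - a * (1 - Wk k u)^2 - v * / (1 + INR k * u).
Definition F1k (k : nat) (x y : R) := (/ ((1 - x)^k) - 1) / INR k.
Definition F2k (a : R) (k : nat) (x y : R) := - (a * x^2 + y) / ((1 - x)^k).

Lemma D_W k f t a : (1 <= k)%nat -> derivable_pt_lim f t a -> 0 < 1 + INR k * f t ->
  derivable_pt_lim (fun s => Wk k (f s)) t (- Wk k (f t) * a / (1 + INR k * f t)).
Proof. intros Hk Hf Hp. unfold Wk. assert (Hk' := INR_pos k Hk).
  eapply D_eq. apply (D_exp (fun s => - ln (1 + INR k * f s) / INR k)).
  apply D_div. apply D_opp. apply D_ln. apply D_plus. apply D_const. apply D_mult. apply D_const.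
  exact Hf. exact Hp. apply D_const. lra. cbv beta. field. lra. Qed.

Lemma fam_sol a k (Q : R -> R -> R) u0 v0 : (1 <= k)%nat ->
  (forall w z v, 0 < w -> z = w^k ->
     Q (1 - w) (- a * (1-w)^2 - v * z) =
     -2*a*(1-w)*v*w*z + (1-z)/INR k + INR k * v^2 * z^2) ->
  (forall t, 0 < 1 + INR k * Uf u0 v0 t) ->
  is_solution (fun x y => - y + x * y - a * x ^ 2 + a * x ^ 3) Q
    (fun t => Xk k (Uf u0 v0 t) (Vf u0 v0 t)) (fun t => Yk a k (Uf u0 v0 t) (Vf u0 v0 t)).
Proof.
  intros Hk HQ Hs t. assert (Hk' := INR_pos k Hk). assert (Ht := Hs t).
  assert (DU := D_Uf u0 v0 t). assert (DV := D_Vf u0 v0 t).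
  set (U := Uf u0 v0) in *. set (V := Vf u0 v0) in *.
  assert (HW := W_pow k (U t) Hk Ht).
  unfold Xk, Yk. split.
  - eapply D_eq. apply D_minus. apply D_const. apply D_W; eauto.
    cbv beta. field. lra.
  - eapply D_eq. apply D_minus. apply D_mult. apply D_const. apply D_pow. apply D_minus. apply D_const.
    apply D_W; eauto. apply D_mult. exact DV. apply D_inv. apply D_plus. apply D_const. apply D_mult.
    apply D_const. exact DU. lra.
    cbv beta. rewrite (HQ (Wk k (U t)) (/ (1 + INR k * U t)) (V t) (W_pos k (U t)) (eq_sym HW)).
    change (pred 2) with 1%nat. change (INR 2) with 2. field. lra.
Qed.
Lemma Rabs_def2b a b : Rabs a <= b -> -b <= a <= b.
Proof. unfold Rabs; destruct (Rcase_abs a); lra. Qed.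

Lemma fam_dot a k u v r : (1 <= k)%nat -> 0 < u^2+v^2 -> Rabs u <= r -> Rabs v <= r ->
  INR k * r <= /4 -> 4 * INR k * Rabs a * r <= 1 ->
  0 < Xk k u v * u - Yk a k u v * v.
Proof.
  intros Hk Huv Hu Hv Hkr Har. assert (Hk' := INR_pos k Hk).
  assert (Hu' := Rabs_def2b u r Hu). assert (Hv' := Rabs_def2b v r Hv).
  assert (Hr : 0 <= r) by (eapply Rle_trans; [apply Rabs_pos|exact Hu]).
  assert (H1 : 3/4 <= 1 + INR k * u).
  { assert (INR k * u >= - (INR k * r)) by nra. lra. }
  set (z := / (1 + INR k * u)).
  assert (Hz0 : 0 < z) by (apply Rinv_0_lt_compat; lra).
  assert (Hz1 : z * (1 + INR k * u) = 1) by (unfold z; field; lra).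
  assert (Hz2 : z <= 4/3).
  { apply Rmult_le_reg_r with (1 + INR k * u); [lra|]. rewrite Hz1. lra. }
  assert (HW := W_pow k u Hk ltac:(lra)). fold z in HW.
  destruct (geo_fact (Wk k u) k (W_pos k u) Hk) as [S [HS ES]].
  rewrite HW in ES.
  assert (HX : 1 - Wk k u = INR k * u * z / S).
  { apply (Rmult_eq_reg_r S); [|lra]. rewrite <- ES. field_simplify; [|lra].
    transitivity (1 - z * (1 + INR k * u) + INR k * u * z); [ring|]. rewrite Hz1; ring. }
  unfold Xk, Yk. fold z. rewrite HX.
  set (t := a * INR k * z * v / S).
  assert (Ht : Rabs t <= /2).
  { unfold t. unfold Rdiv. rewrite !Rabs_mult. rewrite (Rabs_right (INR k)) by lra.
    rewrite (Rabs_right z) by lra. rewrite (Rabs_right (/ S)) by (left; apply Rinv_0_lt_compat; lra).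
    assert (/ S <= 1). { rewrite <- Rinv_1. apply Rinv_le_contravar; lra. }
    assert (Rabs a * INR k * z * Rabs v <= /2).
    { apply Rle_trans with (Rabs a * INR k * (4/3) * r).
      - apply Rmult_le_compat; try apply Rabs_pos; auto.
        + apply Rmult_le_pos; [apply Rmult_le_pos; [apply Rabs_pos|lra]|lra].
        + apply Rmult_le_compat_l; [apply Rmult_le_pos; [apply Rabs_pos|lra]|lra].
      - nra. }
    assert (0 <= Rabs a * INR k * z * Rabs v).
    { apply Rmult_le_pos; [apply Rmult_le_pos; [apply Rmult_le_pos; [apply Rabs_pos|lra]|lra]|apply Rabs_pos]. }
    assert (0 < / S) by (apply Rinv_0_lt_compat; lra). nra. }
  assert (Ht' := Rabs_def2b t (/2) Ht).
  set (m := INR k * u^2 * z / S).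
  assert (Hm : 0 <= m).
  { unfold m. apply Rdiv_le_0_compat; [|lra]. apply Rmult_le_pos; [|lra]. apply Rmult_le_pos; [lra|]. nra. }
  assert (E : INR k * u * z / S * u - (- a * (INR k * u * z / S) ^ 2 - v * z) * v = m * (1 + t) + v^2 * z).
  { unfold m, t. field. lra. }
  rewrite E.
  destruct (Req_dec u 0) as [H0|H0].
  - assert (v <> 0) by (intro; subst; lra).
    assert (0 < v^2) by (apply pow_lt; auto; fail) || (assert (0 < Rsqr v) by (apply Rsqr_pos_lt; auto); unfold Rsqr in *; simpl; nra).
    nra.
  - assert (0 < m).
    { unfold m. apply Rdiv_lt_0_compat; [|lra]. apply Rmult_lt_0_compat; [|lra]. apply Rmult_lt_0_compat; [lra|].
      assert (0 < Rsqr u) by (apply Rsqr_pos_lt; auto). unfold Rsqr in *; simpl; nra. }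
    assert (0 <= v^2) by (simpl; nra). nra.
Qed.
Lemma pow_pred_mul w k : (1 <= k)%nat -> w * w ^ (pred k) = w ^ k.
Proof. intros; destruct k; [lia|]; simpl; ring. Qed.


Lemma fam_zu a k (Q : R -> R -> R) (q0 q1 : R -> R) : (1 <= k)%nat ->
  (forall x y, Q x y = q0 x + q1 x * y + INR k * y ^ 2) ->
  q0 0 = 0 ->
  (forall x, q1 x = 2*a*x + (2 * INR k - 2) * a * x^2) ->
  (forall x, x < 1 -> (1-x)*(1-(1-x)^k)/INR k =
      - INR k * (-a*x^2+a*x^3)^2/(x-1) + q1 x * (-a*x^2+a*x^3) - (x-1)*q0 x) ->
  zero_urabe (fun x y => - y + x * y - a * x ^ 2 + a * x ^ 3) Q.
Proof.
  intros Hk HQ Hq00 Hq1 Hg. assert (Hk' := INR_pos k Hk).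
  apply (zu_gen _ _ (fun x => -a*x^2+a*x^3) (fun x => x - 1) q0 q1 (fun _ => INR k)
     (fun x => -2*a*x + 3*a*x^2) (fun _ => 1) (/2)
     (fun x => - (INR k + 1) * ln (1 - x))
     (fun x => (1-x)*(1-(1-x)^k)/INR k)
     (fun x => (-(1 - (1-x)^k) + (1-x)*(INR k * (1-x)^(pred k)))/INR k)).
  - intros; ring.
  - intros; rewrite HQ; ring.
  - ring.
  - exact Hq00.
  - lra.
  - intro x. eapply D_eq. apply D_plus; apply D_mult; try apply D_const; apply D_pow; apply D_id.
    cbv beta. cbn [pred INR]. ring.
  - intro x. eapply D_eq. apply D_minus. apply D_id. apply D_const. ring.
  - intros x Hx. rewrite Hq1. field. exact Hx.
  - lra.
  - cbv beta. rewrite Rminus_0_r, ln_1. ring.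
  - intros x Hx. split.
    + eapply D_eq. apply D_mult. apply D_const. apply D_ln. apply D_minus. apply D_const. apply D_id. lra.
      cbv beta. field. lra.
    + apply derivable_continuous_pt. eexists. apply D_div. apply D_opp. apply D_plus; apply D_const.
      apply D_minus. apply D_id. apply D_const. lra.
  - intros x Hx. cbv beta. apply Hg. lra.
  - intros x Hx. split.
    + eapply D_eq. apply D_div. apply D_mult. apply D_minus. apply D_const. apply D_id.
      apply D_minus. apply D_const. apply D_pow. apply D_minus. apply D_const. apply D_id.
      apply D_const. lra. cbv beta. field. lra.
    + cbv beta. replace ((1 - x) * (INR k * (1 - x) ^ pred k)) with (INR k * (1-x)^k) by (rewrite <- (pow_pred_mul (1-x) k Hk); ring).
      field. lra.
  - intros x Hx Hx0. cbv beta.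
    destruct (geo_fact (1 - x) k ltac:(lra) Hk) as [S [HS ES]]. rewrite ES.
    replace (x * ((1 - x) * ((1 - (1 - x)) * S) / INR k)) with ((x * x) * ((1-x) * S / INR k)) by (field; lra).
    apply Rmult_lt_0_compat. assert (0 < Rsqr x) by (apply Rsqr_pos_lt; auto). exact H.
    apply Rdiv_lt_0_compat; [apply Rmult_lt_0_compat|]; lra.
Qed.
Lemma sq_abs u : u^2 = (Rabs u)^2.
Proof. unfold Rabs; destruct (Rcase_abs u); ring. Qed.

Lemma abs_le_of_sq u r : u^2 <= r^2 -> 0 <= r -> Rabs u <= r.
Proof. intros. apply Rabs_le. nra. Qed.

Lemma lt_of_sq u d : u^2 < d^2 -> 0 < d -> Rabs u < d.
Proof. intros. unfold Rabs; destruct (Rcase_abs u); nra. Qed.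

Lemma cont_eps (c : R -> R) (x0 eps : R) : continuity_pt c x0 -> 0 < eps ->
  exists alp, 0 < alp /\ forall x, Rabs (x - x0) < alp -> Rabs (c x - c x0) < eps.
Proof.
  intros H He. unfold continuity_pt, continue_in, limit1_in, limit_in in H.
  destruct (H eps He) as [alp [Ha Hx]]. exists alp. split; [lra|].
  intros x Hxa. destruct (Req_dec x x0) as [->|Hne].
  - rewrite Rminus_diag, Rabs_R0; lra.
  - apply (Hx x). split. split; [exact I| auto]. exact Hxa.
Qed.

Lemma fam_iso a k (Q : R -> R -> R) : (1 <= k)%nat ->
  (forall w z v, 0 < w -> z = w^k ->
     Q (1 - w) (- a * (1-w)^2 - v * z) =
     -2*a*(1-w)*v*w*z + (1-z)/INR k + INR k * v^2 * z^2) ->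
  isochronous_center (fun x y => - y + x * y - a * x ^ 2 + a * x ^ 3) Q.
Proof.
  intros Hk HQ. assert (Hk' := INR_pos k Hk).
  assert (Ha0 := Rabs_pos a).
  set (rm := / (4 * INR k * (1 + Rabs a))).
  assert (Hrm : 0 < rm) by (unfold rm; apply Rinv_0_lt_compat; nra).
  assert (Hrm1 : INR k * rm <= /4).
  { unfold rm. apply (Rmult_le_reg_r (4 * (1 + Rabs a))); [lra|].
    replace (INR k * / (4 * INR k * (1 + Rabs a)) * (4 * (1 + Rabs a))) with 1 by (field; lra). nra. }
  assert (Hrm2 : 4 * INR k * Rabs a * rm <= 1).
  { unfold rm. replace (4 * INR k * Rabs a * / (4 * INR k * (1 + Rabs a))) with (Rabs a / (1 + Rabs a)) by (field; lra).
    apply (Rmult_le_reg_r (1 + Rabs a)); [lra|]. unfold Rdiv. rewrite Rmult_assoc, Rinv_l by lra. lra. }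
  assert (Hrm3 : rm <= /4).
  { assert (1 <= INR k) by (apply (le_INR 1); lia). nra. }
  set (c := fun x => / ((1 - x)^k)).
  assert (Hc : continuity_pt c 0).
  { apply derivable_continuous_pt. eexists. apply D_inv. apply D_pow. apply D_minus. apply D_const. apply D_id.
    rewrite Rminus_0_r, pow1. lra. }
  assert (Hc0 : c 0 = 1) by (unfold c; rewrite Rminus_0_r, pow1; apply Rinv_1).
  destruct (cont_eps c 0 (rm/2) Hc ltac:(lra)) as [alp [Halp Hcx]].
  rewrite Hc0 in Hcx.
  set (d := Rmin alp (Rmin (/2) (rm / (8 * (Rabs a + 1))))).
  assert (Hd1 : d <= alp) by apply Rmin_l.
  assert (Hd2 : d <= /2) by (eapply Rle_trans; [apply Rmin_r|apply Rmin_l]).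
  assert (Hd3 : d <= rm / (8 * (Rabs a + 1))) by (eapply Rle_trans; [apply Rmin_r|apply Rmin_r]).
  assert (Hd0 : 0 < d).
  { unfold d. apply Rmin_pos; [lra|]. apply Rmin_pos; [lra|]. apply Rdiv_lt_0_compat; lra. }
  exists d, (2 * PI). split; [exact Hd0|]. split; [assert (PI_RGT_0 := PI_RGT_0); lra|].
  intros x0 y0 [Hxy0 Hxyd].
  assert (Hx0 : Rabs x0 < d) by (apply lt_of_sq; [nra|lra]).
  assert (Hy0 : Rabs y0 < d) by (apply lt_of_sq; [nra|lra]).
  assert (Hx0' := Rabs_def2b x0 d (Rlt_le _ _ Hx0)).
  assert (Hy0' := Rabs_def2b y0 d (Rlt_le _ _ Hy0)).
  assert (Hw0 : 0 < 1 - x0) by lra.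
  assert (Hwk : 0 < (1 - x0)^k) by (apply pow_lt; lra).
  set (u0 := F1k k x0 y0). set (v0 := F2k a k x0 y0).
  assert (E1 : 1 + INR k * u0 = / (1 - x0)^k) by (unfold u0, F1k; field; lra).
  assert (Ex : Xk k u0 v0 = x0).
  { unfold Xk, Wk. rewrite E1, ln_Rinv, ln_pow by lra.
    replace (- - (INR k * ln (1 - x0)) / INR k) with (ln (1 - x0)) by (field; lra).
    rewrite exp_ln by lra. ring. }
  assert (Ey : Yk a k u0 v0 = y0).
  { unfold Yk. fold (Xk k u0 v0). rewrite Ex, E1, Rinv_inv. unfold v0, F2k. field. lra. }
  assert (Hcx0 : Rabs (c x0 - 1) < rm/2) by (apply Hcx; rewrite Rminus_0_r; lra).
  assert (Hcx0' := Rabs_def2b _ _ (Rlt_le _ _ Hcx0)).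
  assert (Hu0 : Rabs u0 <= rm/2).
  { unfold u0, F1k. fold (c x0). apply Rabs_le. split.
    - apply (Rmult_le_reg_r (INR k)); [lra|]. unfold Rdiv. rewrite Rmult_assoc, Rinv_l by lra.
      assert (1 <= INR k) by (apply (le_INR 1); lia). nra.
    - apply (Rmult_le_reg_r (INR k)); [lra|]. unfold Rdiv. rewrite Rmult_assoc, Rinv_l by lra.
      assert (1 <= INR k) by (apply (le_INR 1); lia). nra. }
  assert (Hv0 : Rabs v0 <= rm/4).
  { unfold v0, F2k. unfold Rdiv. fold (c x0).
    rewrite Rabs_mult, Rabs_Ropp.
    assert (Hc1 : Rabs (c x0) <= 2) by (apply Rabs_le; lra).
    assert (Hb : Rabs (a * x0^2 + y0) <= (Rabs a + 1) * d).
    { eapply Rle_trans; [apply Rabs_triang|]. rewrite Rabs_mult.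
      assert (Rabs (x0^2) <= d).
      { rewrite <- RPow_abs. assert (H0 := Rabs_pos x0). simpl. nra. }
      assert (Rabs a * Rabs (x0^2) <= Rabs a * d) by (apply Rmult_le_compat_l; auto). nra. }
    apply Rle_trans with (((Rabs a + 1) * d) * 2).
    - apply Rmult_le_compat; auto using Rabs_pos.
    - apply (Rmult_le_compat_r (2 * (Rabs a + 1))) in Hd3; [|lra].
      replace (rm / (8 * (Rabs a + 1)) * (2 * (Rabs a + 1))) with (rm/4) in Hd3 by (field; lra). lra. }
  set (r := Rabs u0 + Rabs v0).
  assert (Hr : r <= rm) by (unfold r; lra).
  assert (Hr0 : 0 <= r) by (unfold r; assert (H1 := Rabs_pos u0); assert (H2 := Rabs_pos v0); lra).
  assert (HUb : forall t, Rabs (Uf u0 v0 t) <= r /\ Rabs (Vf u0 v0 t) <= r).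
  { intro t. assert (H := UV_sq u0 v0 t).
    assert (Hs : u0^2 + v0^2 <= r^2).
    { unfold r. rewrite (sq_abs u0), (sq_abs v0).
      assert (H1 := Rabs_pos u0); assert (H2 := Rabs_pos v0). nra. }
    split; apply abs_le_of_sq; auto.
    - assert (0 <= Vf u0 v0 t ^ 2) by (simpl; nra). lra.
    - assert (0 <= Uf u0 v0 t ^ 2) by (simpl; nra). lra. }
  assert (Hpos : 0 < u0^2 + v0^2).
  { destruct (Req_dec u0 0) as [Hu|Hu]; [destruct (Req_dec v0 0) as [Hv|Hv]|].
    - exfalso. rewrite <- Ex, <- Ey in Hxy0. rewrite Hu, Hv in Hxy0.
      unfold Xk, Yk, Wk in Hxy0. rewrite Rmult_0_r, Rplus_0_r, ln_1 in Hxy0.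
      replace (- 0 / INR k) with 0 in Hxy0 by (field; lra). rewrite exp_0 in Hxy0.
      simpl in Hxy0. lra.
    - assert (0 < Rsqr v0) by (apply Rsqr_pos_lt; auto). unfold Rsqr in *; simpl; nra.
    - assert (0 < Rsqr u0) by (apply Rsqr_pos_lt; auto). unfold Rsqr in *; simpl; nra. }
  rewrite <- Ex, <- Ey.
  apply (orbit_gen _ _ (Xk k) (Yk a k) (F1k k) (F2k a k)).
  - exact Hpos.
  - apply fam_sol; auto. intro t. destruct (HUb t) as [H1 _]. apply Rabs_def2b in H1. nra.
  - intro t. destruct (HUb t) as [H1 _]. apply Rabs_def2b in H1.
    assert (Ht : 0 < 1 + INR k * Uf u0 v0 t) by nra.
    assert (HW := W_pow k _ Hk Ht).
    unfold F1k, F2k, Xk, Yk. replace (1 - (1 - Wk k (Uf u0 v0 t))) with (Wk k (Uf u0 v0 t)) by ring.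
    rewrite HW. split; field; lra.
  - intro t. destruct (HUb t) as [H1 H2]. apply (fam_dot a k _ _ r Hk); auto.
    rewrite UV_sq; exact Hpos. nra. nra.
Qed.
Definition X1 (b u v : R) := u / (1 + b * u).
Definition Y1 (b u v : R) := (u / (1 + b * u))^2 - v / (1 + b * u).
Definition F11 (b x y : R) := x / (1 - b * x).
Definition F21 (b x y : R) := (x^2 - y) / (1 - b * x).

Lemma s1_sol b u0 v0 : (forall t, 0 < 1 + b * Uf u0 v0 t) ->
  is_solution (fun x y => - y + b * x * y + x ^ 2 - b * x ^ 3)
    (fun x y => x + b * y ^ 2 - 2 * x * y + 2 * x ^ 3 - b * x ^ 4)
    (fun t => X1 b (Uf u0 v0 t) (Vf u0 v0 t)) (fun t => Y1 b (Uf u0 v0 t) (Vf u0 v0 t)).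
Proof.
  intros Hs t. assert (Ht := Hs t).
  assert (DU := D_Uf u0 v0 t). assert (DV := D_Vf u0 v0 t).
  set (U := Uf u0 v0) in *. set (V := Vf u0 v0) in *.
  unfold X1, Y1. split.
  - eapply D_eq. apply D_div. exact DU. apply D_plus. apply D_const. apply D_mult. apply D_const. exact DU. lra.
    cbv beta. field. lra.
  - eapply D_eq. apply D_minus. apply D_pow. apply D_div. exact DU. apply D_plus. apply D_const. apply D_mult. apply D_const. exact DU. lra.
    apply D_div. exact DV. apply D_plus. apply D_const. apply D_mult. apply D_const. exact DU. lra.
    cbv beta. cbn [pred INR]. field. lra.
Qed.

Lemma s1_dot b u v r : 0 < u^2+v^2 -> Rabs u <= r -> Rabs v <= r ->
  Rabs b * r <= /4 -> r <= /4 -> 0 < X1 b u v * u - Y1 b u v * v.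
Proof.
  intros Huv Hu Hv Hbr Hr.
  assert (Hu' := Rabs_def2b u r Hu). assert (Hv' := Rabs_def2b v r Hv).
  assert (Hb' := Rabs_def2b b (Rabs b) (Rle_refl _)).
  assert (Hr0 : 0 <= r) by lra.
  assert (H1 : 3/4 <= 1 + b * u).
  { assert (Rabs (b*u) <= /4).
    { rewrite Rabs_mult. apply Rle_trans with (Rabs b * r); [|lra].
      apply Rmult_le_compat_l; [apply Rabs_pos|lra]. }
    apply Rabs_def2b in H. lra. }
  set (z := / (1 + b * u)).
  assert (Hz0 : 0 < z) by (apply Rinv_0_lt_compat; lra).
  assert (Hz1 : z * (1 + b * u) = 1) by (unfold z; field; lra).
  assert (Hz2 : z <= 4/3).
  { apply Rmult_le_reg_r with (1 + b * u); [lra|]. rewrite Hz1. lra. }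
  unfold X1, Y1. unfold Rdiv. fold z.
  replace (u * z * u - ((u * z)^2 - v * z) * v) with (u^2 * z * (1 - z * v) + v^2 * z) by ring.
  assert (Hzv : z * v <= 1/3) by nra.
  destruct (Req_dec u 0) as [H0|H0].
  - assert (v <> 0) by (intro; subst; lra).
    assert (0 < Rsqr v) by (apply Rsqr_pos_lt; auto). unfold Rsqr in *. subst. simpl. nra.
  - assert (0 < Rsqr u) by (apply Rsqr_pos_lt; auto). unfold Rsqr in *. simpl.
    assert (0 < u * u * z) by (apply Rmult_lt_0_compat; lra).
    assert (0 <= v * v * z) by (apply Rmult_le_pos; [nra|lra]). nra.
Qed.

Lemma s1_zu b : zero_urabe (fun x y => - y + b * x * y + x ^ 2 - b * x ^ 3)
    (fun x y => x + b * y ^ 2 - 2 * x * y + 2 * x ^ 3 - b * x ^ 4).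
Proof.
  assert (Hb0 := Rabs_pos b).
  set (d := / (2 * (1 + Rabs b))).
  assert (Hd : 0 < d) by (unfold d; apply Rinv_0_lt_compat; lra).
  assert (Hbd : forall x, - d < x < d -> Rabs (b * x) < /2).
  { intros x Hx. rewrite Rabs_mult. assert (Rabs x < d) by (apply Rabs_def1; lra).
    apply Rle_lt_trans with (Rabs b * d).
    - apply Rmult_le_compat_l; [auto|lra].
    - unfold d. apply (Rmult_lt_reg_r (2 * (1 + Rabs b))); [lra|].
      rewrite Rmult_assoc, Rinv_l by lra. lra. }
  apply (zu_gen _ _ (fun x => x^2 - b*x^3) (fun x => b*x - 1) (fun x => x + 2*x^3 - b*x^4)
     (fun x => -2*x) (fun _ => b) (fun x => 2*x - 3*b*x^2) (fun _ => b) d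
     (fun x => - 2 * ln (1 - b * x)) (fun x => x * (1 - b * x)) (fun x => 1 - 2 * b * x)).
  - intros; ring.
  - intros; ring.
  - ring.
  - ring.
  - lra.
  - intro x. eapply D_eq. apply D_minus. apply D_pow. apply D_id. apply D_mult. apply D_const. apply D_pow. apply D_id.
    cbv beta. cbn [pred INR]. ring.
  - intro x. eapply D_eq. apply D_minus. apply D_mult. apply D_const. apply D_id. apply D_const. cbv beta. ring.
  - intros x Hx. field. exact Hx.
  - exact Hd.
  - cbv beta. rewrite Rmult_0_r, Rminus_0_r, ln_1. ring.
  - intros x Hx. assert (H := Hbd x Hx). apply Rabs_def2 in H. split.
    + eapply D_eq. apply D_mult. apply D_const. apply D_ln. apply D_minus. apply D_const.
      apply D_mult. apply D_const. apply D_id. lra. cbv beta. field. lra.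
    + apply derivable_continuous_pt. eexists. apply D_div. apply D_opp. apply D_plus; apply D_const.
      apply D_minus. apply D_mult. apply D_const. apply D_id. apply D_const. lra.
  - intros x Hx. assert (H := Hbd x Hx). apply Rabs_def2 in H. cbv beta. field. lra.
  - intros x Hx. assert (H := Hbd x Hx). apply Rabs_def2 in H. split.
    + eapply D_eq. apply D_mult. apply D_id. apply D_minus. apply D_const. apply D_mult. apply D_const. apply D_id.
      cbv beta. ring.
    + cbv beta. field. lra.
  - intros x Hx Hx0. assert (H := Hbd x Hx). apply Rabs_def2 in H. cbv beta.
    replace (x * (x * (1 - b * x))) with (Rsqr x * (1 - b * x)) by (unfold Rsqr; ring).
    apply Rmult_lt_0_compat; [apply Rsqr_pos_lt; auto|lra].
Qed.
Lemma s1_iso b : isochronous_center (fun x y => - y + b * x * y + x ^ 2 - b * x ^ 3)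
    (fun x y => x + b * y ^ 2 - 2 * x * y + 2 * x ^ 3 - b * x ^ 4).
Proof.
  assert (Hb0 := Rabs_pos b).
  set (rm := / (4 * (1 + Rabs b))).
  assert (Hrm : 0 < rm) by (unfold rm; apply Rinv_0_lt_compat; lra).
  assert (Hrm1 : Rabs b * rm <= /4).
  { unfold rm. apply (Rmult_le_reg_r (4 * (1 + Rabs b))); [lra|].
    rewrite Rmult_assoc, Rinv_l by lra. lra. }
  assert (Hrm2 : rm <= /4).
  { unfold rm. apply (Rmult_le_reg_r (4 * (1 + Rabs b))); [lra|].
    rewrite Rinv_l by lra. lra. }
  set (d := rm / 6).
  assert (Hd0 : 0 < d) by (unfold d; lra).
  exists d, (2 * PI). split; [exact Hd0|]. split; [assert (PI_RGT_0 := PI_RGT_0); lra|].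
  intros x0 y0 [Hxy0 Hxyd].
  assert (Hx0 : Rabs x0 < d) by (apply lt_of_sq; [nra|lra]).
  assert (Hy0 : Rabs y0 < d) by (apply lt_of_sq; [nra|lra]).
  assert (Hx0' := Rabs_def2b x0 d (Rlt_le _ _ Hx0)).
  assert (Hy0' := Rabs_def2b y0 d (Rlt_le _ _ Hy0)).
  assert (Hbx : Rabs (b * x0) <= /4).
  { rewrite Rabs_mult. apply Rle_trans with (Rabs b * rm); [|lra].
    apply Rmult_le_compat_l; [lra|]. unfold d in Hx0. lra. }
  apply Rabs_def2b in Hbx.
  set (u0 := F11 b x0 y0). set (v0 := F21 b x0 y0).
  assert (E1 : 1 + b * u0 = / (1 - b * x0)) by (unfold u0, F11; field; lra).
  assert (Ex : X1 b u0 v0 = x0).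
  { unfold X1. rewrite E1. unfold u0, F11. field. lra. }
  assert (Ey : Y1 b u0 v0 = y0).
  { unfold Y1. fold (X1 b u0 v0). rewrite Ex. unfold Rdiv at 1. rewrite E1, Rinv_inv. unfold v0, F21. field. lra. }
  assert (Hu0 : Rabs u0 <= 2 * d).
  { unfold u0, F11. apply Rabs_le. split.
    - apply (Rmult_le_reg_r (1 - b * x0)); [lra|]. unfold Rdiv. rewrite Rmult_assoc, Rinv_l by lra. nra.
    - apply (Rmult_le_reg_r (1 - b * x0)); [lra|]. unfold Rdiv. rewrite Rmult_assoc, Rinv_l by lra. nra. }
  assert (Hd1 : d <= 1) by (unfold d; lra).
  assert (Hv0 : Rabs v0 <= 4 * d).
  { unfold v0, F21. apply Rabs_le.
    assert (0 <= x0^2 <= d) by (simpl; nra). split.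
    - apply (Rmult_le_reg_r (1 - b * x0)); [lra|]. unfold Rdiv. rewrite Rmult_assoc, Rinv_l by lra. nra.
    - apply (Rmult_le_reg_r (1 - b * x0)); [lra|]. unfold Rdiv. rewrite Rmult_assoc, Rinv_l by lra. nra. }
  set (r := Rabs u0 + Rabs v0).
  assert (Hr : r <= rm) by (unfold r, d in *; lra).
  assert (Hr0 : 0 <= r) by (unfold r; assert (H1 := Rabs_pos u0); assert (H2 := Rabs_pos v0); lra).
  assert (HUb : forall t, Rabs (Uf u0 v0 t) <= r /\ Rabs (Vf u0 v0 t) <= r).
  { intro t. assert (H := UV_sq u0 v0 t).
    assert (Hs : u0^2 + v0^2 <= r^2).
    { unfold r. rewrite (sq_abs u0), (sq_abs v0).
      assert (H1 := Rabs_pos u0); assert (H2 := Rabs_pos v0). nra. }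
    split; apply abs_le_of_sq; auto.
    - assert (0 <= Vf u0 v0 t ^ 2) by (simpl; nra). lra.
    - assert (0 <= Uf u0 v0 t ^ 2) by (simpl; nra). lra. }
  assert (Hbr : Rabs b * r <= /4).
  { apply Rle_trans with (Rabs b * rm); [|lra]. apply Rmult_le_compat_l; lra. }
  assert (HbU : forall t, 3/4 <= 1 + b * Uf u0 v0 t).
  { intro t. destruct (HUb t) as [H1 _].
    assert (Rabs (b * Uf u0 v0 t) <= /4).
    { rewrite Rabs_mult. apply Rle_trans with (Rabs b * r); [|lra].
      apply Rmult_le_compat_l; [apply Rabs_pos|lra]. }
    apply Rabs_def2b in H. lra. }
  assert (Hpos : 0 < u0^2 + v0^2).
  { destruct (Req_dec u0 0) as [Hu|Hu]; [destruct (Req_dec v0 0) as [Hv|Hv]|].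
    - exfalso. rewrite <- Ex, <- Ey in Hxy0. rewrite Hu, Hv in Hxy0.
      unfold X1, Y1 in Hxy0. replace (0 / (1 + b * 0)) with 0 in Hxy0 by (field; lra).
      simpl in Hxy0. lra.
    - assert (0 < Rsqr v0) by (apply Rsqr_pos_lt; auto). unfold Rsqr in *; simpl; nra.
    - assert (0 < Rsqr u0) by (apply Rsqr_pos_lt; auto). unfold Rsqr in *; simpl; nra. }
  rewrite <- Ex, <- Ey.
  apply (orbit_gen _ _ (X1 b) (Y1 b) (F11 b) (F21 b)).
  - exact Hpos.
  - apply s1_sol. intro t. assert (H := HbU t). lra.
  - intro t. assert (H := HbU t).
    unfold F11, F21, X1, Y1.
    assert (K : 1 - b * (Uf u0 v0 t / (1 + b * Uf u0 v0 t)) = / (1 + b * Uf u0 v0 t)) by (field; lra).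
    rewrite K. split; field; lra.
  - intro t. destruct (HUb t) as [H1 H2]. apply (s1_dot b _ _ r); auto.
    rewrite UV_sq; exact Hpos. lra.
Qed.
Theorem theorem4p2 : forall b a : R,
  isochronous_center_zero_urabe
    (fun x y => - y + b * x * y + x ^ 2 - b * x ^ 3)
    (fun x y => x + b * y ^ 2 - 2 * x * y + 2 * x ^ 3 - b * x ^ 4) /\
  isochronous_center_zero_urabe
    (fun x y => - y + x * y - a * x ^ 2 + a * x ^ 3)
    (fun x y => x + y ^ 2 + 2 * a * x * y + 2 * a ^ 2 * x ^ 3 - a ^ 2 * x ^ 4) /\
  isochronous_center_zero_urabe
    (fun x y => - y + x * y - a * x ^ 2 + a * x ^ 3)
    (fun x y => x + 3 * y ^ 2 + 2 * a * x * y - x ^ 2 + 4 * a * x ^ 2 * y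
                + (/ 3 + 2 * a ^ 2) * x ^ 3 + a ^ 2 * x ^ 4) /\
  isochronous_center_zero_urabe
    (fun x y => - y + x * y - a * x ^ 2 + a * x ^ 3)
    (fun x y => x + 4 * y ^ 2 + 2 * a * x * y - 3 / 2 * x ^ 2 + 6 * a * x ^ 2 * y
                + (1 + 2 * a ^ 2) * x ^ 3 + (- / 4 + 2 * a ^ 2) * x ^ 4).
Proof.
  intros b a. split; [|split; [|split]].
  - split. apply s1_iso. apply s1_zu.
  - split.
    + apply (fam_iso a 1); [lia|]. intros w z v Hw ->. cbn [INR]. field.
    + apply (fam_zu a 1 _ (fun x => x + 2 * a^2 * x^3 - a^2 * x^4) (fun x => 2 * a * x)); [lia| | | |].
      * intros; cbn [INR]; ring.
      * ring.
      * intros; cbn [INR]; ring.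
      * intros x Hx. cbn [INR]. field. lra.
  - split.
    + apply (fam_iso a 3); [lia|]. intros w z v Hw ->. cbn [INR]. field.
    + apply (fam_zu a 3 _ (fun x => x - x^2 + (/3 + 2 * a^2) * x^3 + a^2 * x^4) (fun x => 2 * a * x + 4 * a * x^2)); [lia| | | |].
      * intros; cbn [INR]; ring.
      * ring.
      * intros; cbn [INR]; ring.
      * intros x Hx. cbn [INR]. field. lra.
  - split.
    + apply (fam_iso a 4); [lia|]. intros w z v Hw ->. cbn [INR]. field.
    + apply (fam_zu a 4 _ (fun x => x - 3/2 * x^2 + (1 + 2 * a^2) * x^3 + (- /4 + 2 * a^2) * x^4) (fun x => 2 * a * x + 6 * a * x^2)); [lia| | | |].
      * intros; cbn [INR]; ring.
      * ring.
      * intros; cbn [INR]; ring.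
      * intros x Hx. cbn [INR]. field. lra.
Qed.
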